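(* Define, for $n'\in\mathbb{N}_+$ and $n\in\{0,\dots,n'\}$, $\gamma_{n,n'}=\Big(\sum_{j=0}^{n}\binom{n'}{j}\Big){\rm e}_{n'}$. Then the collection $(\gamma_{n,n'})_{n'\in\mathbb{N}_+,n\in\{0,\dots,n'\}}$ belongs to $\Gamma$ (i.e. satisfies the bound condition).
   Context: $\sigma(x)=\max(0,x)$; $\mathrm{RL}(n,n')$ ($n,n'\in\mathbb{N}_+$) is the set of maps $h:\mathbb{R}^n\to\mathbb{R}^{n'}$, $h(x)_i=\sigma(\langle x,w_i\rangle+b_i)$ for some $W\in\mathbb{R}^{n'\times n}$ with rows $w_i$, $b\in\mathbb{R}^{n'}$; convention: $\mathrm{RL}(0,n')$ are constant maps $\{0\}\to\mathbb{R}^{n'}$ with $\mathcal{H}_{n'}(\mathcal{S}_h)={\rm e}_0$. $S_h(x)_i=1$ iff $\langle x,w_i\rangle+b_i>0$ else $0$; $\mathcal{S}_h=\{S_h(x):x\in\mathbb{R}^n\}$; $|s|=\sum_is_i$. $V$: sequences $(v_j)_{j\in\mathbb{N}}$ of nonnegative integers with finite sum; ${\rm e}_i$ has $({\rm e}_i)_j=\delta_{ij}$; $v\preceq w$ iff $\sum_{j\ge J}v_j\le\sum_{j\ge J}w_j$ for all $J\in\mathbb{N}$; for finite families, $\max_i(v^{(i)})_J=\max_i\sum_{j\ge J}v^{(i)}_j-\max_i\sum_{j\ge J+1}v^{(i)}_j$. $\mathcal{H}_{n'}(\mathcal{S})=(|\{s\in\mathcal{S}:|s|=j\}|)_j$.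 $\Gamma$ (bound condition): families $(\gamma_{n,n'})_{n'\in\mathbb{N}_+,n\in\{0,\dots,n'\}}$ in $V$ with (i) $\max\{\mathcal{H}_{n'}(\mathcal{S}_h):h\in\mathrm{RL}(n,n')\}\preceq\gamma_{n,n'}$ for all $n'\in\mathbb{N}_+$, $n\in\{0,\dots,n'\}$, and (ii) $n\le\tilde n\le n'\Rightarrow\gamma_{n,n'}\preceq\gamma_{\tilde n,n'}$. *)

(* Defs.v *)
From HB Require Import structures.
From mathcomp Require Import all_boot all_order all_algebra.
From mathcomp Require Import boolp reals.
Set Implicit Arguments. Unset Strict Implicit. Unset Printing Implicit Defensive.
Import Order.TTheory GRing.Theory Num.Theory.

(* V : finitely supported sequences of naturals, represented as finite lists
   (v_j := nth 0 v j, zero beyond the list). *)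
Definition V := seq nat.
Definition coord (v : V) (j : nat) : nat := nth 0%N v j.
Definition tail (v : V) (J : nat) : nat := (\sum_(J <= j < size v) coord v j)%N.
Definition preceq (v w : V) : Prop := forall J, (tail v J <= tail w J)%N.
Definition scal_e (c i : nat) : V := rcons (nseq i 0%N) c.
Definition e_ (i : nat) : V := scal_e 1 i.

Definition is_max_nat (P : nat -> Prop) (t : nat) : Prop :=
  P t /\ forall u, P u -> (u <= t)%N.
Definition is_maxV (F : V -> Prop) (m : V) : Prop :=
  exists T : nat -> nat,
    (forall J, is_max_nat (fun t => exists v, F v /\ t = tail v J) (T J)) /\
    (forall J, coord m J = T J - T J.+1)%N.

Definition Hvec (n' : nat) (S : {set {ffun 'I_n' -> bool}}) : V :=
  mkseq (fun j => #|[set s in S | (\sum_(i < n') s i == j)%N]|) n'.+1.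

Section RL.
Variable R : realType.
Local Open Scope ring_scope.
(* h(x) = sigma(W x + b); activation pattern S_h(x) *)
Definition pattern n n' (W : 'M[R]_(n', n)) (b : 'cV[R]_n') (x : 'cV[R]_n)
  : {ffun 'I_n' -> bool} := [ffun i => 0 < (W *m x + b) i 0].
Definition Sh n n' (W : 'M[R]_(n', n)) (b : 'cV[R]_n') : {set {ffun 'I_n' -> bool}} :=
  [set s | `[< exists x, s = pattern W b x >]].
(* H_{n'}(S_h) for h in RL(n,n'); for n = 0 the convention H = e_0 *)
Definition H_RL n n' (W : 'M[R]_(n', n)) (b : 'cV[R]_n') : V :=
  if n == 0%N then e_ 0 else Hvec (Sh W b).
Definition RLfam (n n' : nat) : V -> Prop :=
  fun v => exists (W : 'M[R]_(n', n)) (b : 'cV[R]_n'), v = H_RL W b.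

Definition bound_condition (g : nat -> nat -> V) : Prop :=
  (forall n' n, (0 < n')%N -> (n <= n')%N ->
     exists m, is_maxV (RLfam n n') m /\ preceq m (g n n')) /\
  (forall n' n nt, (0 < n')%N -> (n <= nt)%N -> (nt <= n')%N ->
     preceq (g n n') (g nt n')).
End RL.

Definition gamma_binom (n n' : nat) : V :=
  scal_e (\sum_(j < n.+1) 'C(n', j))%N n'.

(* Main.v *)
Require Import Defs.
From HB Require Import structures.
From mathcomp Require Import all_boot all_order all_algebra.
From mathcomp Require Import boolp reals zify.
Set Implicit Arguments. Unset Strict Implicit. Unset Printing Implicit Defensive.
Import Order.TTheory GRing.Theory Num.Theory.

Section Pajor.
Variable T : finType.
Definition shatters (F : {set {set T}}) (S : {set T}) : bool :=
  [forall B : {set T}, (B \subset S) ==> [exists A in F, A :&: S == B]].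
Definition shset F := [set S | shatters F S].

Lemma shattersP (F : {set {set T}}) (S : {set T}) : reflect (forall B : {set T}, B \subset S -> exists2 A, A \in F & A :&: S = B) (shatters F S).
Proof.
apply: (iffP forallP) => [H B BS|H B].
  by move: (H B); rewrite BS /= => /existsP[A /andP[AF /eqP E]]; exists A.
apply/implyP => /H[A AF E]; apply/existsP; exists A; by rewrite AF E eqxx.
Qed.

Lemma shatters_mono (F G : {set {set T}}) (S : {set T}) : F \subset G -> shatters F S -> shatters G S.
Proof.
move=> FG /shattersP H; apply/shattersP => B /H[A AF E]; exists A => //.
exact: (subsetP FG).
Qed.

Lemma pajor (F : {set {set T}}) : #|F| <= #|shset F|.
Proof.
have [N leFN] : exists N, #|F| <= N by exists #|F|.
elim: N F leFN => [|N IH] F.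
  by rewrite leqn0 => /eqP ->.
move=> leFN.
case: (leqP #|F| 1) => [F1|F2].
  case: (posnP #|F|) => [-> //|Fpos].
  apply: (leq_trans F1); rewrite card_gt0; apply/set0Pn; exists set0.
  rewrite inE; apply/shattersP => B; rewrite subset0 => /eqP ->.
  case/card_gt0P: Fpos => A AF; exists A => //; by rewrite setI0.
have [A1 [A2 [A1F A2F neq]]] : exists A1 A2, [/\ A1 \in F, A2 \in F & A1 != A2].
  case/card_gt0P: (ltnW F2) => A1 A1F.
  have : 0 < #|F :\ A1| by rewrite (cardsD1 A1) A1F in F2.
  case/card_gt0P => A2; rewrite !inE => /andP[ne A2F].
  by exists A1, A2; split=> //; rewrite eq_sym.
have [x [A [B [AF BF xA xB]]]] : exists x A B, [/\ A \in F, B \in F, x \in A & x \notin B].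
  have : A1 :\: A2 :|: A2 :\: A1 != set0.
    apply: contra neq => /eqP E; apply/eqP/setP => y.
    have := congr1 (fun X : {set T} => y \in X) E; rewrite !inE.
    by case: (y \in A1); case: (y \in A2).
  case/set0Pn => x; rewrite !inE => /orP[/andP[n1 i1]|/andP[n2 i2]].
    by exists x, A1, A2.
  by exists x, A2, A1.
pose X := [set C : {set T} | x \in C].
pose F1 := F :&: X. pose F0 := F :\: X.
have cF : #|F1| + #|F0| = #|F| by rewrite cardsID.
have F1pos : 0 < #|F1| by apply/card_gt0P; exists A; rewrite !inE AF xA.
have F0pos : 0 < #|F0| by apply/card_gt0P; exists B; rewrite !inE BF xB.
have IH1 := IH F1 (ltac:(lia)).
have IH0 := IH F0 (ltac:(lia)).
pose S0 := shset F0. pose S1 := shset F1.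
have sub0 : S0 \subset shset F.
  apply/subsetP => S; rewrite !inE; apply: shatters_mono; apply/subsetP => C.
  by rewrite !inE => /andP[].
have sub1 : S1 \subset shset F.
  apply/subsetP => S; rewrite !inE; apply: shatters_mono; apply/subsetP => C.
  by rewrite !inE => /andP[].
have nx0 : forall S, S \in S0 -> x \notin S.
  move=> S; rewrite inE => /shattersP H; apply/negP => xS.
  have [C] := H [set x] (ltac:(by rewrite sub1set)).
  rewrite !inE => /andP[xC _] E.
  have := congr1 (fun Y : {set T} => x \in Y) E; rewrite !inE xS eqxx andbT => E'.
  by rewrite E' in xC.
have nx1 : forall S, S \in S1 -> x \notin S.
  move=> S; rewrite inE => /shattersP H; apply/negP => xS.
  have [C] := H set0 (sub0set _).
  rewrite !inE => /andP[_ xC] E.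
  have := congr1 (fun Y : {set T} => x \in Y) E; by rewrite !inE xS xC.
pose I := (fun S => x |: S) @: (S0 :&: S1).
have cI : #|I| = #|S0 :&: S1|.
  apply: card_in_imset => S S'; rewrite !in_setI => /andP[h0 _] /andP[h0' _] E.
  by rewrite -(setU1K (nx0 _ h0)) -(setU1K (nx0 _ h0')) E.
have Isub : I \subset shset F.
  apply/subsetP => Y /imsetP[S]; rewrite in_setI => /andP[h0 h1] ->.
  have xS := nx0 _ h0.
  move: h0 h1; rewrite !inE => /shattersP H0 /shattersP H1.
  apply/shattersP => C CS.
  case xC: (x \in C).
    have CS' : C :\ x \subset S.
      apply/subsetP => y; rewrite !inE => /andP[yx yC].
      by move/subsetP: CS => /(_ y yC); rewrite !inE (negbTE yx).
    have [D] := H1 (C :\ x) CS'.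
    rewrite !inE => /andP[DF xD] E; exists D => //.
    apply/setP => y; have := congr1 (fun Y : {set T} => y \in Y) E; rewrite !inE.
    case: (eqVneq y x) => [->|_]; by rewrite ?xD ?xC.
  have CS' : C \subset S.
    apply/subsetP => y yC.
    move/subsetP: CS => /(_ y yC); rewrite !inE => /orP[/eqP yx|//]; by move: yC; rewrite yx xC.
  have [D] := H0 C CS'.
  rewrite !inE => /andP[xD DF] E; exists D => //.
  apply/setP => y; have := congr1 (fun Y : {set T} => y \in Y) E; rewrite !inE.
  case: (eqVneq y x) => [->|_]; by rewrite ?(negbTE xD) ?xC.
have disj : [disjoint I & S0 :|: S1].
  rewrite -setI_eq0; apply/eqP/setP => S; rewrite in_setI in_setU in_set0.
  apply/negP => /andP[/imsetP[S' _ ->]] /orP[h|h];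
    [have := nx0 _ h | have := nx1 _ h]; by rewrite setU11.
have : #|I :|: (S0 :|: S1)| <= #|shset F|.
  by apply: subset_leq_card; rewrite subUset Isub subUset sub0 sub1.
have dI : I :&: (S0 :|: S1) = set0 by apply/eqP; rewrite setI_eq0.
rewrite cardsU dI cards0 subn0.
have := cardsUI S0 S1. move: IH0 IH1; rewrite -/S0 -/S1 cI. lia.
Qed.

Lemma card_small n : #|[set S : {set T} | #|S| <= n]| = (\sum_(j < n.+1) 'C(#|T|, j))%N.
Proof.
elim: n => [|n IH].
  rewrite big_ord_recr big_ord0 /= -card_draws; apply: eq_card => S; by rewrite !inE leqn0.
rewrite big_ord_recr /= -IH -card_draws.
have dI : [set S : {set T} | #|S| <= n] :&: [set S : {set T} | #|S| == n.+1] = set0.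
  apply/setP => S; rewrite !inE.
  apply/negbTE; apply/negP => /andP[a /eqP b]; by rewrite b ltnn in a.
have := cardsU [set S : {set T} | #|S| <= n] [set S : {set T} | #|S| == n.+1].
rewrite dI cards0 subn0 => <-.
apply: eq_card => S; rewrite !inE leq_eqVlt ltnS orbC //.
Qed.
End Pajor.




Section LA.
Variable R : realType.
Local Open Scope ring_scope.
Definition Fam n n' (W : 'M[R]_(n', n)) (b : 'cV[R]_n') : {set {set 'I_n'}} :=
  [set [set i | s i] | s : {ffun 'I_n' -> bool} in Sh W b].

Lemma Fam_in n n' (W : 'M[R]_(n', n)) b A : A \in Fam W b ->
  exists x : 'cV[R]_n, A = [set i | 0 < (W *m x + b) i 0].
Proof.
move=> /imsetP[s]; rewrite inE => /asboolP[x ->] ->; exists x.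
by apply/setP => i; rewrite !inE ffunE.
Qed.

Lemma B1_lemma n n' (W : 'M[R]_(n', n)) b (S : {set 'I_n'}) (v : 'I_#|S| -> R) (c : R) :
  (forall x : 'cV[R]_n, \sum_a v a * (W *m x + b) (enum_val a) 0 = c) ->
  0 <= c -> (0 < c) || [exists a, v a < 0] -> ~~ shatters (Fam W b) S.
Proof.
move=> key c0 hc; apply/negP => /shattersP H.
pose B1 := (@enum_val _ (mem S)) @: [set a | v a < 0].
have B1S : B1 \subset S by apply/subsetP => _ /imsetP[a _ ->]; exact: enum_valP.
have [A /Fam_in[x ->] E] := H B1 B1S.
have sg : forall a, (0 < (W *m x + b) (enum_val a) 0) = (v a < 0).
  move=> a; have := congr1 (fun Y : {set 'I_n'} => enum_val a \in Y) E.
  by rewrite !inE enum_valP andbT mem_imset ?inE //; exact: enum_val_inj.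
have tle : forall a, v a * (W *m x + b) (enum_val a) 0 <= 0.
  move=> a; case: (ltrP (v a) 0) => va.
    by apply/ltW; rewrite nmulr_rlt0 // sg.
  by apply: mulr_ge0_le0 => //; rewrite leNgt sg -leNgt.
have := key x => ckey.
case/orP: hc => [cpos|/existsP[a0 va0]].
  have : c <= 0 by rewrite -ckey; apply: sumr_le0 => a _; exact: tle.
  by rewrite leNgt cpos.
have : c < 0.
  rewrite -ckey (bigD1 a0) //=.
  have h1 : v a0 * (W *m x + b) (enum_val a0) 0 < 0 by rewrite nmulr_rlt0 // sg.
  have h2 : \sum_(i | i != a0) v i * (W *m x + b) (enum_val i) 0 <= 0.
    by apply: sumr_le0 => a _; exact: tle.
  by have := ltr_leD h1 h2; rewrite addr0.
by rewrite ltNge c0.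
Qed.

Lemma not_shatter n n' (W : 'M[R]_(n', n)) b (S : {set 'I_n'}) :
  (n < #|S|)%N -> ~~ shatters (Fam W b) S.
Proof.
move=> ltnS.
pose M : 'M[R]_(#|S|, n) := \matrix_(a, j) W (enum_val a) j.
have : ~~ row_free M.
  rewrite /row_free; apply: contraL ltnS => /eqP <-; by rewrite -leqNgt rank_leq_col.
rewrite -kermx_eq0 => /rowV0Pn[v /sub_kermxP vM /rV0Pn[i0 vi0]].
pose bS : 'cV[R]_#|S| := \col_a b (enum_val a) 0.
pose c := (v *m bS) 0 0.
have key : forall x : 'cV[R]_n, \sum_a v 0 a * (W *m x + b) (enum_val a) 0 = c.
  move=> x.
  have -> : c = (v *m (M *m x + bS)) 0 0 by rewrite mulmxDr mulmxA vM mul0mx add0r.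
  rewrite mxE; apply: eq_bigr => a _; congr (_ * _).
  rewrite !mxE; congr (_ + _); apply: eq_bigr => j _; by rewrite mxE.
case: (boolP ((0 <= c) && ((0 < c) || [exists a, v 0 a < 0]))) => [/andP[h1 h2]|hn].
  exact: (B1_lemma key).
apply: (@B1_lemma _ _ _ _ _ (fun a => - v 0 a) (- c)).
- by move=> x; rewrite -(key x) -sumrN; apply: eq_bigr => a _; rewrite mulNr.
- move: hn; rewrite negb_and => /orP[|]; first by rewrite -ltNge oppr_ge0 => /ltW.
  rewrite negb_or -leNgt => /andP[]; by rewrite oppr_ge0.
- move: hn; rewrite negb_and => /orP[|].
    by rewrite -ltNge oppr_gt0 => ->.
  rewrite negb_or -leNgt negb_exists => /andP[_ /forallP hv].
  apply/orP; right; apply/existsP; exists i0; rewrite oppr_lt0.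
  by rewrite lt_def vi0 /= leNgt hv.
Qed.
End LA.




Lemma tail_geq v J : (size v <= J)%N -> tail v J = 0%N.
Proof. by move=> h; rewrite /tail big_geq. Qed.

Lemma tail_S v J : (tail v J.+1 <= tail v J)%N.
Proof.
rewrite /tail; case: (ltnP J (size v)) => h.
  by rewrite [X in (_ <= X)%N]big_ltn // leq_addl.
by rewrite big_geq ?(leq_trans h) // big_geq.
Qed.

Lemma tail_le0 v J : (tail v J <= tail v 0)%N.
Proof. elim: J => // J IH; exact: leq_trans (tail_S v J) IH. Qed.

Lemma tail_scal_e c i J : tail (scal_e c i) J = if (J <= i)%N then c else 0%N.
Proof.
case: leqP => h; last by rewrite tail_geq // /scal_e size_rcons size_nseq.
rewrite /tail /scal_e size_rcons size_nseq big_nat_recr //=.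
rewrite /Defs.coord nth_rcons size_nseq ltnn eqxx.
rewrite big_nat_cond big1 // => j /andP[/andP[_ ji] _].
by rewrite nth_rcons size_nseq ji nth_nseq ji.
Qed.

Definition wt n' (s : {ffun 'I_n' -> bool}) := (\sum_(i < n') s i)%N.

Lemma wt_le n' s : (@wt n' s <= n')%N.
Proof.
rewrite /wt -[X in (_ <= X)%N]card_ord -sum1_card; apply: leq_sum => i _; exact: leq_b1.
Qed.

Lemma Hvec_tail0 n' (S : {set {ffun 'I_n' -> bool}}) : tail (Hvec S) 0 = #|S|.
Proof.
rewrite /tail /Hvec size_mkseq big_mkord.
rewrite (eq_bigr (fun j : 'I_n'.+1 => \sum_(s in S) (wt s == j) : nat)); last first.
  move=> j _; rewrite /Defs.coord nth_mkseq // -sum1_card big_mkcond [RHS]big_mkcond /=.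
  apply: eq_bigr => s _; rewrite !inE /wt.
  by case: (s \in S); case: (_ == _).
rewrite exchange_big /= -sum1_card; apply: eq_bigr => s _.
transitivity (\sum_(j < n'.+1 | j == wt s :> nat) 1)%N.
  rewrite [RHS]big_mkcond /=; apply: eq_bigr => j _; by rewrite eq_sym; case: eqP.
by rewrite (big_ord1_eq _ (fun _ => 1%N)) ltnS wt_le.
Qed.

Section Main.
Variable R : realType.
Local Open Scope ring_scope.

Lemma card_Sh n n' (W : 'M[R]_(n', n)) b :
  (#|Sh W b| <= \sum_(j < n.+1) 'C(n', j))%N.
Proof.
have -> : #|Sh W b| = #|Fam W b|.
  rewrite /Fam card_imset //= => s s' E; apply/ffunP => i.
  by have := congr1 (fun Y : {set 'I_n'} => i \in Y) E; rewrite !inE.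
apply: (leq_trans (pajor _)).
rewrite -[n' in X in (_ <= X)%N]card_ord -card_small.
apply: subset_leq_card; apply/subsetP => S; rewrite !inE => sh.
rewrite leqNgt; apply/negP => lt; by move: sh; apply/negP; apply: not_shatter.
Qed.

Lemma HRL_bound n n' (W : 'M[R]_(n', n)) b J :
  (tail (H_RL W b) J <= \sum_(j < n.+1) 'C(n', j))%N.
Proof.
rewrite /H_RL; case: eqP => [->|_].
  rewrite /e_ tail_scal_e big_ord_recl bin0; case: ifP => // _; exact: leq_addr.
apply: leq_trans (tail_le0 _ _) _; rewrite Hvec_tail0; exact: card_Sh.
Qed.

Lemma HRL_size n n' (W : 'M[R]_(n', n)) b : (size (H_RL W b) <= n'.+1)%N.
Proof.
rewrite /H_RL; case: eqP => _; first by rewrite /e_ /scal_e size_rcons size_nseq.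
by rewrite /Hvec size_mkseq.
Qed.
End Main.

Lemma ex_max_nat (P : nat -> Prop) bnd : (exists t, P t) -> (forall t, P t -> (t <= bnd)%N) ->
  exists t, is_max_nat P t.
Proof.
move=> ne; elim: bnd => [|k IH] hb.
  case: ne => t Pt; exists t; split => // u Pu; by rewrite (leq_trans (hb u Pu)).
case: (pselect (P k.+1)) => Pk.
  by exists k.+1; split.
apply: IH => t Pt; have := hb t Pt; rewrite leq_eqVlt => /orP[/eqP E|//].
by rewrite E in Pt.
Qed.

Lemma tele (T : nat -> nat) J N : (J <= N)%N -> (forall j, T j.+1 <= T j)%N ->
  (\sum_(J <= j < N) (T j - T j.+1) + T N)%N = T J.
Proof.
move=> JN mono; elim: N JN => [|N IH] JN.
  by move: JN; rewrite leqn0 => /eqP ->; rewrite big_geq.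
case: (ltngtP J N.+1) JN => // h _.
  rewrite big_nat_recr //= -addnA subnK // IH //.
by rewrite h big_geq.
Qed.

Theorem mainTheorem8 (R : realType) : bound_condition R gamma_binom.
Proof.
split.
  move=> n' n n'pos nle.
  set c := (\sum_(j < n.+1) 'C(n', j))%N.
  pose P J t := exists v, RLfam R n n' v /\ t = tail v J.
  have hT : forall J, exists t, is_max_nat (P J) t.
    move=> J; apply: (@ex_max_nat _ c).
      by exists (tail (H_RL (0 : 'M[R]_(n', n))%R 0%R) J); exists (H_RL (0 : 'M[R]_(n', n))%R 0%R); split => //; exists (0 : 'M[R]_(n', n))%R, 0%R.
    by move=> t [v [[W [b ->]] ->]]; exact: HRL_bound.
  case: (choice hT) => T hT'.
  have Tbig : forall J, (n' < J)%N -> T J = 0%N.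
    move=> J hJ; have [[v [[W [b ->]] ->]] _] := hT' J.
    by apply: tail_geq; apply: leq_trans (HRL_size W b) hJ.
  have Tle : forall J, (T J <= c)%N.
    by move=> J; have [[v [[W [b ->]] ->]] _] := hT' J; exact: HRL_bound.
  have mono : forall j, (T j.+1 <= T j)%N.
    move=> j; have [[v [hv ->]] _] := hT' j.+1.
    apply: leq_trans (tail_S v j) _; apply: (proj2 (hT' j)); by exists v.
  exists (mkseq (fun J => T J - T J.+1)%N n'.+1); split.
    exists T; split => // J; rewrite /Defs.coord.
    case: (ltnP J n'.+1) => h; first by rewrite nth_mkseq.
    by rewrite nth_default ?size_mkseq // !Tbig //; lia.
  move=> J; rewrite /gamma_binom tail_scal_e.
  case: (leqP J n') => h; last by rewrite tail_geq // size_mkseq.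
  rewrite /tail size_mkseq.
  have E : (\sum_(J <= j < n'.+1) Defs.coord (mkseq (fun J => T J - T J.+1) n'.+1) j
     = \sum_(J <= j < n'.+1) (T j - T j.+1))%N.
    apply: eq_big_nat => j /andP[_ hj].
    by rewrite /Defs.coord nth_mkseq.
  rewrite E; have := tele (leq_trans h (leqnSn n')) mono.
  rewrite Tbig // addn0 => ->; exact: Tle.
move=> n' n nt _ le1 le2 J; rewrite /gamma_binom !tail_scal_e.
case: (J <= n')%N; last exact: leqnn.
rewrite -(big_mkord xpredT (fun j => 'C(n', j))) -(big_mkord xpredT (fun j => 'C(n', j))).
rewrite [X in (_ <= X)%N](@big_cat_nat _ _ _ n.+1) ?ltnS //.
exact: leq_addr.
Qed.
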